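(* Suppose there exists an $[n,k_0]$ code $C_0$ over $\mathbb{F}_q$ with $d(C_0^\perp)=\delta\ge 3$. If $C$ is an $[n,k]$ code over $\mathbb{F}_q$ with $d(C^\perp)=\delta$ and $k>k_0$, then $\gamma(C)\le k-d(C^\perp)+2$.
   Context: An $[n,k]$ code over $\mathbb{F}_q$ is a $k$-dimensional subspace $C\subseteq\mathbb{F}_q^n$; write $E=\{1,\dots,n\}$. For $\bm{x}\in\mathbb{F}_q^n$, $\mathrm{supp}(\bm{x})=\{i: x_i\neq 0\}$ and the weight is $|\mathrm{supp}(\bm{x})|$; for $B\subseteq\mathbb{F}_q^n$, $\mathrm{Supp}(B)=\bigcup_{\bm{x}\in B}\mathrm{supp}(\bm{x})$. $C^\perp$ is the dual code with respect to the standard inner product and $d(C^\perp)$ is the minimum weight of a nonzero codeword of $C^\perp$. The covering dimension is $\gamma(C)=\infty$ if $\mathrm{Supp}(C)\neq E$, and otherwise $\gamma(C)$ is the least positive integer $r$ such that $C$ has an $r$-dimensional subspace $D$ with $\mathrm{Supp}(D)=E$. *)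

(* Defs.v *)
From HB Require Import structures.
From mathcomp Require Import all_boot all_order all_algebra all_field.
Set Implicit Arguments. Unset Strict Implicit. Unset Printing Implicit Defensive.
Import GRing.Theory.
Local Open Scope ring_scope.

(* Vectors of F^n are row vectors 'rV[F]_n; coordinates are indexed by 'I_n
   (E = {1,...,n} is represented as 'I_n = {0,...,n-1}).
   An [n,k] code is a subspace C : {vspace 'rV[F]_n} with \dim C = k. *)

Definition supp (F : finFieldType) (n : nat) (x : 'rV[F]_n) : {set 'I_n} :=
  [set i | x 0 i != 0].

Definition wt (F : finFieldType) (n : nat) (x : 'rV[F]_n) : nat := #|supp x|.

Definition Supp (F : finFieldType) (n : nat) (B : {vspace 'rV[F]_n}) : {set 'I_n} :=
  [set i | [exists x : 'rV[F]_n, (x \in B) && (x 0 i != 0)]].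

Definition dotp (F : finFieldType) (n : nat) (x y : 'rV[F]_n) : F :=
  \sum_(i < n) x 0 i * y 0 i.

Definition in_dual (F : finFieldType) (n : nat) (C : {vspace 'rV[F]_n}) (x : 'rV[F]_n) : Prop :=
  forall y : 'rV[F]_n, y \in C -> dotp x y = 0.

Definition dual_min_dist (F : finFieldType) (n : nat) (C : {vspace 'rV[F]_n}) (d : nat) : Prop :=
  (exists x : 'rV[F]_n, [/\ in_dual C x, x != 0 & wt x = d]) /\
  (forall x : 'rV[F]_n, in_dual C x -> x != 0 -> (d <= wt x)%N).

Definition covers_with (F : finFieldType) (n : nat) (C : {vspace 'rV[F]_n}) (r : nat) : Prop :=
  exists D : {vspace 'rV[F]_n}, [/\ (D <= C)%VS, \dim D = r & Supp D = setT].

(* gamma(C) = r (finite): Supp(C) = E and r is the least positive integer such that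
   C has an r-dimensional subspace of full support.  gamma(C) = infinity iff no such r. *)
Definition covering_dim (F : finFieldType) (n : nat) (C : {vspace 'rV[F]_n}) (r : nat) : Prop :=
  [/\ Supp C = setT, (0 < r)%N, covers_with C r &
      forall r' : nat, (0 < r')%N -> (r' < r)%N -> ~ covers_with C r'].

(* Main.v *)
Require Import Defs.
From HB Require Import structures.
From mathcomp Require Import all_boot all_order all_algebra all_field.
From Stdlib Require Import Classical.
From mathcomp Require Import zify.
Set Implicit Arguments. Unset Strict Implicit. Unset Printing Implicit Defensive.
Import GRing.Theory.
Local Open Scope ring_scope.
Lemma interp (F : finFieldType) n (C : {vspace 'rV[F]_n}) (d : nat)
  (hmin : forall x, in_dual C x -> x != 0 -> (d <= wt x)%N) (s : seq 'I_n) :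
  uniq s -> (size s < d)%N ->
  exists U : 'I_n -> 'rV[F]_n, forall j, j \in s ->
     U j \in C /\ forall m, m \in s -> U j 0 m = (m == j)%:R.
Proof.
elim: s => [|l s IH] /=; first by move=> _ _; exists (fun _ => 0).
move=> /andP [ls us] hs.
have [U hU] := IH us (ltnW hs).
have [w [wC w0 wl]] : exists w, [/\ w \in C, (forall m, m \in s -> w 0 m = 0) & w 0 l = 1].
  case: (boolP [exists w : 'rV[F]_n, (w \in C) &&
      [forall m, (m \in s) ==> (w 0 m == 0)] && (w 0 l != 0)]).
    case/existsP=> w /andP [/andP [wC /forallP w0] wl].
    exists ((w 0 l)^-1 *: w); split.
    - exact: memvZ.
    - by move=> m ms; rewrite mxE (eqP (implyP (w0 m) ms)) mulr0.
    - by rewrite mxE mulVf.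
  move=> hno; exfalso.
  pose x : 'rV[F]_n := \row_i ((i == l)%:R - (i \in s)%:R * U i 0 l).
  have hx : in_dual C x.
    move=> y yC; rewrite /dotp.
    pose z := y - \sum_(m <- s) y 0 m *: U m.
    have zC : z \in C.
      apply: memvB => //; rewrite big_seq; apply: memv_suml => m ms; apply: memvZ; by case: (hU m ms).
    have hz : forall m', m' \in s -> z 0 m' = 0.
      move=> m' m's; rewrite /z !mxE summxE big_uniq //=.
      rewrite (bigD1 m') //= mxE (proj2 (hU m' m's) m' m's) eqxx mulr1.
      rewrite big1 ?addr0 ?subrr // => m /andP [ms nm]; rewrite mxE (proj2 (hU m ms) m' m's).
      by rewrite eq_sym (negbTE nm) mulr0.
    have zl : z 0 l = 0.
      apply/eqP; apply: contraNT hno => zl; apply/existsP; exists z.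
      rewrite zC zl andbT /=; apply/forallP => m; apply/implyP => ms.
      by rewrite hz.
    move: zl; rewrite /z !mxE summxE big_uniq //= => /eqP; rewrite subr_eq0 => /eqP zl.
    rewrite /x; under eq_bigr => i _ do rewrite mxE mulrBl.
    rewrite sumrB (bigD1 l) //= eqxx mul1r big1 ?addr0; last first.
      by move=> i /negbTE ->; rewrite mul0r.
    rewrite zl; apply/eqP; rewrite subr_eq0; apply/eqP.
    rewrite [RHS](bigID (fun i => i \in s)) /= [X in _ + X]big1 ?addr0; last first.
      by move=> i /negbTE ->; rewrite !mul0r.
    by apply: eq_bigr => i ->; rewrite mul1r mxE mulrC.
  have hx0 : x != 0.
    apply/eqP => h; have := congr1 (fun M : 'rV[F]_n => M 0 l) h.
    by rewrite !mxE eqxx (negbTE ls) mul0r subr0 => /eqP; rewrite oner_eq0.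
  have := hmin x hx hx0.
  have : (wt x <= size (l :: s))%N.
    have /card_uniqP <- : uniq (l :: s) by rewrite /= ls us.
    rewrite /wt -cardsE; apply: subset_leq_card; apply/subsetP => i.
    rewrite !inE mxE; case: (i =P l) => [-> //|_] /=.
    by case: (i \in s) => //; rewrite mul0r subr0 eqxx.
  move=> h1 h2; have := leq_trans h2 h1; by rewrite leqNgt hs.
exists (fun j => if j == l then w else U j - U j 0 l *: w) => j.
rewrite inE; case: (j =P l) => [->|jl] /=.
  move=> _; split=> // m; rewrite inE; case: (m =P l) => [->|ml] /=; first by rewrite wl.
  by move=> ms; rewrite w0.
move=> js; have [UC Us] := hU j js; split.
  by apply: memvB => //; apply: memvZ.
move=> m; rewrite inE !mxE; case: (m =P l) => [->|ml] /=.
  by rewrite wl mulr1 subrr; case: (l =P j) => // lj; rewrite -lj in js; rewrite js in ls.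
by move=> ms; rewrite w0 // mulr0 subr0 Us.
Qed.

Lemma card_sum_cond (T : finType) (A : {set T}) (P : pred T) :
  #|[set x in A | P x]| = (\sum_(x in A) (P x : nat))%N.
Proof.
rewrite -sum1dep_card big_mkcond [RHS]big_mkcond; apply: eq_bigr => x _.
by case: (x \in A); case: (P x).
Qed.

Lemma fiber_bound (F : finFieldType) n (X : {set 'rV[F]_n}) (i : 'I_n) (c0 : 'rV[F]_n) :
  c0 0 i != 0 -> (forall c a, c \in X -> c + a *: c0 \in X) ->
  (#|F| * #|[set c in X | c 0%R i == 0%R]| <= #|X|)%N.
Proof.
move=> hc0 hX.
set Z := [set c in X | c 0%R i == 0%R].
rewrite -cardsT -cardsX.
have <- : #|[set p.2 + p.1 *: c0 | p in setX [set: F] Z]| = #|setX [set: F] Z|.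
  apply: card_in_imset => [[a c]] [a' c'] /=; rewrite !inE /= => /andP [_ /eqP hc] /andP [_ /eqP hc'] h.
  have ha : a = a'.
    have := congr1 (fun M : 'rV[F]_n => M 0 i) h; rewrite !mxE hc hc' !add0r.
    by move/(mulIf hc0).
  by rewrite -ha in h *; move/addIr: h => ->.
apply: subset_leq_card; apply/subsetP => y /imsetP [[a c]]; rewrite !inE /= => /andP [cX _] ->.
exact: hX.
Qed.

Lemma avg (F : finFieldType) n (X : {set 'rV[F]_n}) (U : {set 'I_n}) :
  X != set0 ->
  (forall i, i \in U -> exists c0 : 'rV[F]_n,
      c0 0 i != 0 /\ forall c a, c \in X -> c + a *: c0 \in X) ->
  exists2 c, c \in X & (#|F| * #|[set i in U | c 0%R i == 0%R]| <= #|U|)%N.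
Proof.
move=> hX hU.
have hsum : (#|F| * \sum_(c in X) #|[set i in U | c 0%R i == 0%R]| <= #|U| * #|X|)%N.
  under eq_bigr => c _ do rewrite card_sum_cond.
  rewrite exchange_big /= big_distrr /= -sum_nat_const.
  apply: leq_sum => i iU; rewrite -card_sum_cond.
  have [c0 [h1 h2]] := hU i iU; exact: fiber_bound h1 h2.
apply/exists_inP; apply: contraLR hsum => /exists_inPn hall.
rewrite -ltnNge mulnC -sum_nat_const big_distrr /=.
have [c cX] : exists c, c \in X by apply/set0Pn.
rewrite (bigD1 c) //= [X in (_ < X)%N](bigD1 c) //=.
rewrite -addSn leq_add //; first by rewrite ltnNge hall.
apply: leq_sum => c' /andP [c'X _]; rewrite leqNgt -ltnNge in hall *.
by apply: ltnW; rewrite ltnNge hall.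
Qed.

Lemma greedy (F : finFieldType) n (C : {vspace 'rV[F]_n})
  (hfull : forall i, exists c0, c0 \in C /\ c0 0 i != 0) (l : nat) (U : {set 'I_n}) :
  exists cs : seq 'rV[F]_n, [/\ size cs = l, all (fun c => c \in C) cs &
   (#|F| ^ l * #|[set i in U | all (fun c : 'rV[F]_n => c 0%R i == 0%R) cs]| <= #|U|)%N].
Proof.
elim: l U => [|l IH] U.
  exists [::]; split=> //; rewrite mul1n; apply: subset_leq_card.
  by apply/subsetP => i; rewrite inE => /andP [].
have hX : [set c | c \in C] != set0.
  by apply/set0Pn; exists 0; rewrite inE mem0v.
case: (@avg F n [set c | c \in C] U hX) => [i _|c cX hc].
  have [c0 [h1 h2]] := hfull i; exists c0; split=> // c a; rewrite !inE => cC.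
  by apply: memvD => //; apply: memvZ.
set U1 := [set i in U | c 0%R i == 0%R] in hc.
have [cs [h1 h2 h3]] := IH U1.
exists (c :: cs); split; first by rewrite /= h1.
  by rewrite /= h2 andbT; move: cX; rewrite inE.
rewrite expnS -mulnA; apply: leq_trans hc; rewrite leq_mul2l; apply/orP; right.
apply: leq_trans h3; rewrite leq_mul2l; apply/orP; right.
apply: subset_leq_card; apply/subsetP => i.
by rewrite !inE /= andbA.
Qed.

Lemma c0_bound (F : finFieldType) n (C0 : {vspace 'rV[F]_n}) m
  (hmin0 : forall x, in_dual C0 x -> x != 0 -> (m.+3 <= wt x)%N) (hm : (m <= n)%N) :
  exists d, (d + m = \dim C0)%N /\ (n - m <= #|F| ^ d)%N.
Proof.
pose w := widen_ord hm.
have winj : injective w by move=> a b /(congr1 (@nat_of_ord _)) /= /val_inj.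
pose s0 := [seq w x | x <- enum 'I_m].
have us0 : uniq s0 by rewrite map_inj_uniq ?enum_uniq.
have ss0 : size s0 = m by rewrite size_map size_enum_ord.
have ws0 : forall l, w l \in s0 by move=> l; apply: map_f; rewrite mem_enum.
have hsz : (size s0 < m.+3)%N by rewrite ss0 ltnS leqW.
have [U0 hU0] := interp hmin0 us0 hsz.
pose P : 'M[F]_(n, m) := \matrix_(i, l) (i == w l)%:R.
pose f : 'Hom('rV[F]_n, 'rV[F]_m) := linfun (mulmxr P).
have fE : forall x l, f x 0 l = x 0 (w l).
  move=> x l; rewrite /f lfunE /=.
  rewrite mxE (bigD1 (w l)) //= mxE eqxx mulr1 big1 ?addr0 //.
  by move=> i /negbTE hi; rewrite mxE hi mulr0.
have hdim := limg_ker_dim f C0.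
have himg : \dim (f @: C0) = m.
  apply/eqP; rewrite eqn_leq; apply/andP; split.
    by have := dimvS (subvf (f @: C0)); rewrite dimvf /dim /= mul1n.
  have : (fullv <= f @: C0)%VS.
    apply/subvP => y _.
    have -> : y = f (\sum_(l < m) y 0 l *: U0 (w l)).
      apply/rowP => l; rewrite fE summxE.
      rewrite (bigD1 l) //= mxE (proj2 (hU0 _ (ws0 l)) _ (ws0 l)) eqxx mulr1 big1 ?addr0 //.
      move=> l' hl'; rewrite mxE (proj2 (hU0 _ (ws0 l')) _ (ws0 l)).
      case: eqP => [/winj h|]; last by rewrite mulr0.
      by rewrite h eqxx in hl'.
    apply: memv_img; apply: memv_suml => l _; apply: memvZ; exact: (proj1 (hU0 _ (ws0 l))).
  by move/dimvS; rewrite dimvf /dim /= mul1n.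
set C0' := (C0 :&: lker f)%VS in hdim.
exists (\dim C0'); split; first by rewrite -himg.
pose col (i : 'I_n) : 'rV[F]_(\dim C0') := \row_a (vbasis C0')`_a 0 i.
have hcol : {in [set i | i \notin s0] &, injective col}.
  move=> i j; rewrite !inE => is0 js0 hij; apply/eqP; apply/negP => /negP nij.
  have uq : uniq [:: i, j & s0] by rewrite /= inE negb_or nij is0 js0 us0.
  have hsz' : (size [:: i, j & s0] < m.+3)%N by rewrite /= ss0.
  have [V hV] := interp hmin0 uq hsz'.
  have [VC Vs] := hV i (mem_head _ _).
  have VC' : V i \in C0'.
    rewrite memv_cap VC memv_ker /=; apply/eqP/rowP => l; rewrite fE mxE.
    rewrite Vs; last by rewrite !inE ws0 !orbT.
    case: eqP => [h|_] //; by move: is0; rewrite -h ws0.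
  have e := coord_vbasis VC'.
  have : V i 0 i = V i 0 j.
    rewrite e !summxE; apply: eq_bigr => a _; rewrite !mxE.
    by have := congr1 (fun M : 'rV[F]_(\dim C0') => M 0 a) hij; rewrite !mxE => ->.
  rewrite !Vs ?inE ?eqxx ?orbT //= eq_sym (negbTE nij) => /eqP; by rewrite oner_eq0.
have h2 := card_in_imset hcol.
have hsub : (col @: [set i | i \notin s0] \subset [set: 'rV[F]_(\dim C0')]) by apply/subsetP.
move/subset_leq_card: hsub; rewrite cardsT card_mx mul1n h2 => h1.
apply: leq_trans h1.
have e2 : #|~: [set i | i \notin s0]| = m.
  rewrite -ss0; move/card_uniqP: us0 => <-; apply: eq_card => i.
  by rewrite !inE negbK.
have hC' : (#|[set i | i \notin s0]| + m = n)%N.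
  by rewrite -e2; exact: etrans (cardsC _) (card_ord n).
apply: (@leq_trans (#|[set i | i \notin s0]| + m - m)); first by rewrite hC'.
by rewrite addnK.
Qed.

Lemma min_cover (F : finFieldType) n (C : {vspace 'rV[F]_n}) (N : nat) :
  forall r, (0 < r)%N -> (r <= N)%N -> covers_with C r ->
  exists r', [/\ (0 < r')%N, (r' <= r)%N, covers_with C r' &
     forall r'', (0 < r'')%N -> (r'' < r')%N -> ~ covers_with C r''].
Proof.
elim: N => [|N IH] r r0 rN hr; first by move: r0 rN hr; case: r.
case: (classic (exists r'', [/\ (0 < r'')%N, (r'' < r)%N & covers_with C r''])).
  move=> [r'' [h1 h2 h3]].
  have h4 : (r'' <= N)%N by lia.
  have [r' [a b c e]] := IH r'' h1 h4 h3.
  exists r'; split=> //; lia.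
move=> hno; exists r; split=> // r'' h1 h2 h3; apply: hno; by exists r''.
Qed.


Theorem mainTheorem14 (F : finFieldType) (n k0 delta : nat)
  (C0 : {vspace 'rV[F]_n}) (hC0dim : \dim C0 = k0)
  (hC0 : dual_min_dist C0 delta) (hdelta : (3 <= delta)%N)
  (k : nat) (C : {vspace 'rV[F]_n}) (hCdim : \dim C = k)
  (hC : dual_min_dist C delta) (hk : (k0 < k)%N) :
  exists r : nat, covering_dim C r /\ (r + delta <= k + 2)%N.
Proof.
have [m hm] : exists m, delta = m.+3 by exists (delta - 3)%N; rewrite -addn3 subnK.
subst delta.
have hmin0 := hC0.2; have hmin := hC.2.
have hn : (m.+3 <= n)%N.
  have [x [_ _ wx]] := hC0.1; rewrite -wx /wt.
  by apply: leq_trans (max_card _) _; rewrite card_ord.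
have hmn : (m <= n)%N by lia.
have [d [hd hnd]] := c0_bound hmin0 hmn.
have hfull : forall i, exists c0, c0 \in C /\ c0 0 i != 0.
  move=> i; have [U hU] := interp hmin (s := [:: i]) erefl erefl.
  have [UC Us] := hU i (mem_head _ _); exists (U i); split=> //.
  by rewrite Us ?mem_head // eqxx oner_eq0.
have hd1 : (0 < d)%N.
  case: d hd hnd => // _ /=; rewrite expn0 => h; lia.
pose r := (k - m.+1)%N.
have hr : (d <= r)%N by rewrite /r; lia.
have hmT : (m.+1 <= n)%N by lia.
pose w := widen_ord hmT.
have winj : injective w by move=> a b /(congr1 (@nat_of_ord _)) /= /val_inj.
pose T := [seq w x | x <- enum 'I_(m.+1)].
have uT : uniq T by rewrite map_inj_uniq ?enum_uniq.
have sT : size T = m.+1 by rewrite size_map size_enum_ord.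
have hszT : (size T < m.+3)%N by rewrite sT.
have [UT hUT] := interp hmin uT hszT.
pose A := [set c | (c \in C) && all (fun t => c 0 t == 1) T].
have hA : A != set0.
  apply/set0Pn; exists (\sum_(t <- T) UT t); rewrite inE; apply/andP; split.
    by rewrite big_seq; apply: memv_suml => t tT; case: (hUT t tT).
  apply/allP => t tT; rewrite summxE big_uniq //= (bigD1 t) //=.
  rewrite (proj2 (hUT t tT) t tT) eqxx big1 ?addr0 // => t' /andP [t'T nt].
  by rewrite (proj2 (hUT t' t'T) t tT) eq_sym (negbTE nt).
pose U0 := [set i | i \notin T].
have [c1 c1A hc1] : exists2 c, c \in A &
    (#|F| * #|[set i in U0 | c 0%R i == 0%R]| <= #|U0|)%N.
  apply: avg hA _ => i; rewrite inE => iT.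
  have uq : uniq (i :: T) by rewrite /= iT uT.
  have hsz : (size (i :: T) < m.+3)%N by rewrite /= sT.
  have [V hV] := interp hmin uq hsz.
  have [VC Vs] := hV i (mem_head _ _).
  exists (V i); split; first by rewrite Vs ?mem_head // eqxx oner_eq0.
  move=> c a; rewrite !inE => /andP [cC /allP ct]; apply/andP; split.
    by apply: memvD => //; apply: memvZ.
  apply/allP => t tT; rewrite !mxE (eqP (ct t tT)) Vs ?inE ?tT ?orbT //.
  have ti : (t == i) = false by apply/eqP => e; rewrite -e tT in iT.
  by rewrite ti mulr0 addr0.
set U1 := [set i in U0 | c1 0%R i == 0%R] in hc1.
have [cs [hcs1 hcs2 hcs3]] := greedy hfull r.-1 U1.
set U2 := [set i in U1 | _] in hcs3.
have hU0 : #|U0| = (n - m.+1)%N.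
  have e2 : #|~: U0| = m.+1.
    rewrite -sT; move/card_uniqP: uT => <-; apply: eq_card => i.
    by rewrite !inE negbK.
  have hC' : (#|U0| + m.+1 = n)%N.
    by rewrite -e2; exact: etrans (cardsC _) (card_ord n).
  lia.
have hq : (0 < #|F|)%N by apply/card_gt0P; exists 0.
have hU2 : #|U2| = 0%N.
  apply/eqP; rewrite -leqn0; rewrite leqNgt; apply/negP => h.
  have h1 : (#|F| ^ r <= #|F| ^ r * #|U2|)%N by rewrite leq_pmulr.
  have h2 : (#|F| ^ r * #|U2| <= #|U0|)%N.
    have -> : r = (r.-1).+1 by lia.
    by rewrite expnS -mulnA; apply: leq_trans hc1; rewrite leq_mul2l hcs3 orbT.
  have h3 : (#|F| ^ d <= #|F| ^ r)%N by rewrite leq_pexp2l.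
  lia.
pose D := <<c1 :: cs>>%VS.
have hDC : (D <= C)%VS.
  apply/span_subvP => c; rewrite inE => /orP [/eqP ->|cs_c].
    by move: c1A; rewrite inE => /andP [].
  by move/allP: hcs2 => /(_ c cs_c).
have hDsupp : Supp D = setT.
  apply/setP => i; rewrite !inE; apply/existsP.
  have c1D : c1 \in D by apply: memv_span; rewrite mem_head.
  case: (boolP (i \in T)) => iT.
    exists c1; rewrite c1D /=; move: c1A; rewrite inE => /andP [_ /allP /(_ i iT) /eqP ->].
    by rewrite oner_eq0.
  case: (boolP (c1 0 i == 0)) => ci; last by exists c1; rewrite c1D.
  case: (boolP (all (fun c : 'rV[F]_n => c 0%R i == 0%R) cs)) => hall.
    have : i \in U2 by rewrite !inE iT ci hall.
    by move/eqP: hU2; rewrite cards_eq0 => /eqP ->; rewrite in_set0.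
  have [c cs_c hc] := allPn hall.
  by exists c; rewrite hc andbT; apply: memv_span; rewrite inE cs_c orbT.
have hdimD : (\dim D <= r)%N.
  apply: leq_trans (dim_span _) _; rewrite /= hcs1; lia.
have hDpos : (0 < \dim D)%N.
  rewrite lt0n dimv_eq0; apply/eqP => D0.
  have i0 : 'I_n := Ordinal (leq_trans (isT : (0 < m.+3)%N) hn).
  have : i0 \in Supp D by rewrite hDsupp inE.
  rewrite inE => /existsP [x /andP [xD xi]]; move: xD; rewrite D0 memv0 => /eqP xe.
  by rewrite xe mxE eqxx in xi.
have hcov : covers_with C (\dim D) by exists D.
have [r' [h1 h2 h3 h4]] := min_cover hDpos hdimD hcov.
exists r'; split; last by lia.
split=> //.
apply/setP => i; rewrite !inE; apply/existsP.
have [c0 [h5 h6]] := hfull i; by exists c0; rewrite h5.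
Qed.
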